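(* Each of the following forms graphs is geodesic-transitive: the bilinear forms graph $\mathrm{Bil}(m,k,q)$ ($m\le k$), the alternating forms graph $\mathrm{Alt}(k,q)$, and the Hermitian forms graph $\mathrm{Her}(k,r)$.
   Context: $\mathrm{Bil}(m,k,q)$: vertices are the $m\times k$ matrices over $\mathbb{F}_q$, $X,Y$ adjacent iff $\mathrm{rk}(X-Y)=1$ (equivalently, bilinear maps $\mathbb{F}_q^m\times\mathbb{F}_q^k\to\mathbb{F}_q$). $\mathrm{Alt}(k,q)$: vertices are the skew-symmetric $k\times k$ matrices over $\mathbb{F}_q$ with zero diagonal (alternating forms on $\mathbb{F}_q^k$), $X,Y$ adjacent iff $\mathrm{rk}(X-Y)=2$. $\mathrm{Her}(k,r)$: with $q=r^2$ and $\sigma$ the field automorphism of $\mathbb{F}_q$ of order $2$, vertices are the $k\times k$ Hermitian matrices $M$ over $\mathbb{F}_q$ (i.e. $M^{\mathsf T}=M^{\sigma}$), $X,Y$ adjacent iff $\mathrm{rk}(X-Y)=1$. A geodesic of length $\ell$ is a vertex sequence $(v_0,\dots,v_\ell)$ with consecutive vertices adjacent and $d(v_0,v_\ell)=\ell$; a graph is geodesic-transitive if its automorphism group is transitive on geodesics of each length. *)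

(* Defs.v *)
From HB Require Import structures.
From mathcomp Require Import all_boot all_order all_algebra all_fingroup all_field.
Set Implicit Arguments. Unset Strict Implicit. Unset Printing Implicit Defensive.
Import GRing.Theory.
Local Open Scope ring_scope.

Section Graph.
Variables (T : finType) (e : rel T).

Definition walk_len (x y : T) (n : nat) : Prop :=
  exists s : seq T, size s = n /\ path e x s /\ last x s = y.

(* v = (v_0, ..., v_l) is a geodesic of length l = size v - 1:
   consecutive vertices adjacent and d(v_0, v_l) = l, i.e. there is no
   shorter walk from v_0 to v_l. *)
Definition geodesic (v : seq T) : Prop :=
  match v with
  | [::] => False
  | x :: s => path e x s /\ (forall n, (n < size s)%N -> ~ walk_len x (last x s) n)
  end.

Definition graph_aut (g : {perm T}) : Prop := forall x y, e (g x) (g y) = e x y.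

Definition geodesic_transitive : Prop :=
  forall u v : seq T, size u = size v -> geodesic u -> geodesic v ->
    exists g : {perm T}, graph_aut g /\ map g u = v.
End Graph.

Section Forms.
Variable F : finFieldType.

Definition bil_adj (m k : nat) : rel 'M[F]_(m, k) :=
  fun X Y => \rank (X - Y) == 1%N.

Definition alternating (k : nat) (A : 'M[F]_k) : bool :=
  (A^T == - A) && [forall i, A i i == 0].
Definition alt_vertex (k : nat) := {A : 'M[F]_k | alternating A}.
Definition alt_adj (k : nat) : rel (alt_vertex k) :=
  fun X Y => \rank (val X - val Y) == 2%N.

Definition hermitian (sigma : F -> F) (k : nat) (A : 'M[F]_k) : bool :=
  A^T == map_mx sigma A.
Definition her_vertex (sigma : F -> F) (k : nat) := {A : 'M[F]_k | hermitian sigma A}.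
Definition her_adj (sigma : F -> F) (k : nat) : rel (her_vertex sigma k) :=
  fun X Y => \rank (val X - val Y) == 1%N.
End Forms.

(* Main.v *)
Require Import Defs.
From HB Require Import structures.
From mathcomp Require Import all_boot all_order all_algebra all_fingroup all_field.
From mathcomp Require Import zify.
Set Implicit Arguments. Unset Strict Implicit. Unset Printing Implicit Defensive.
Import GRing.Theory.
Local Open Scope ring_scope.
Section Generic.
Variables (T : finType) (e : rel T) (d : T -> T -> nat).
Hypothesis eE : forall x y, e x y = (d x y == 1%N).
Hypothesis d0 : forall x y, d x y = 0%N -> x = y.
Hypothesis dxx : forall x, d x x = 0%N.
Hypothesis dtri : forall x y z, (d x z <= d x y + d y z)%N.
Hypothesis dstep : forall x y n, d x y = n.+1 -> exists z, e x z /\ d z y = n.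

Lemma walk_exists_n n : forall x y, d x y = n -> walk_len e x y n.
Proof.
elim: n => [|n IH] x y H.
  by exists [::]; rewrite (d0 H).
have [z [exz dzy]] := dstep H.
have [s [s1 [s2 s3]]] := IH _ _ dzy.
by exists (z :: s); rewrite /= s1 exz s2 s3.
Qed.

Lemma walk_le n : forall x y, walk_len e x y n -> (d x y <= n)%N.
Proof.
elim: n => [|n IH] x y [[|z s] [sz [p l]]] //=.
  by rewrite -l /= dxx.
case: sz => sz; move/andP: p => [exz p].
have := IH z y (ex_intro _ s (conj sz (conj p l))).
have := dtri x z y; rewrite eE in exz; move/eqP: exz => ->.
move=> h1 h2; lia.
Qed.

Lemma last_take_nth (x : T) s i : (i <= size s)%N -> last x (take i s) = nth x (x :: s) i.
Proof.
elim: s x i => [|y s IH] x [|i] //= h.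
by rewrite IH // (set_nth_default x).
Qed.

Lemma geo_dist x s : geodesic e (x :: s) ->
  forall i, (i <= size s)%N -> d x (nth x (x :: s) i) = i.
Proof.
move=> [p nw] i hi.
have hl : (size s <= d x (last x s))%N.
  rewrite leqNgt; apply/negP => lt.
  exact: (nw _ lt (walk_exists_n (erefl _))).
have h1 : (d x (nth x (x :: s) i) <= i)%N.
  apply: walk_le; exists (take i s); rewrite size_take_min.
  split; first lia.
  move: p; rewrite -{1}(cat_take_drop i s) cat_path => /andP[p1 _].
  by rewrite last_take_nth.
have h2 : (d (nth x (x :: s) i) (last x s) <= size s - i)%N.
  apply: walk_le; exists (drop i s); rewrite size_drop.
  split => //.
  move: p; rewrite -{1}(cat_take_drop i s) cat_path => /andP[_ p2].
  rewrite -last_take_nth //; split => //.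
  by rewrite -last_cat cat_take_drop.
have := dtri x (nth x (x :: s) i) (last x s).
lia.
Qed.

Lemma gt_std (std : nat -> seq T) :
  (forall x s, path e x s -> (forall i, (i <= size s)%N -> d x (nth x (x :: s) i) = i) ->
     exists g : {perm T}, graph_aut e g /\ map g (std (size s)) = x :: s) ->
  geodesic_transitive e.
Proof.
move=> H [|x s] [|y t] //= [sz] gu gv.
have [g1 [a1 m1]] := H x s (proj1 gu) (geo_dist gu).
have [g2 [a2 m2]] := H y t (proj1 gv) (geo_dist gv).
exists (g1^-1 * g2)%g; split.
  move=> a b; rewrite !permM a2.
  by rewrite -a1 !permKV.
transitivity (map (g1^-1 * g2)%g (map g1 (std (size s)))); first by rewrite m1.
rewrite sz -m2 -map_comp; apply: eq_map => a /=.
by rewrite permM permK.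
Qed.
End Generic.
Section MatLemmas.
Variable F : fieldType.

Lemma rank_mulL_unit m n (P : 'M[F]_m) (A : 'M[F]_(m,n)) :
  P \in unitmx -> \rank (P *m A) = \rank A.
Proof.
move=> uP; rewrite -mxrank_tr trmx_mul mxrankMfree ?mxrank_tr //.
by rewrite row_free_unit unitmx_tr.
Qed.

Lemma rank_mulR_unit m n (Q : 'M[F]_n) (A : 'M[F]_(m,n)) :
  Q \in unitmx -> \rank (A *m Q) = \rank A.
Proof. by move=> uQ; rewrite mxrankMfree // row_free_unit. Qed.

Lemma rank_red m n k (A : 'M[F]_(m,n)) (C : 'M_n) (X : 'M_(k,m)) :
  X *m (A - A *m C) = 0 -> row_free (X *m A) -> (\rank (A - A *m C)%R + k <= \rank A)%N.
Proof.
move=> XB fXA.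
set B := A - A *m C.
have sub : (kermx A + X <= kermx B)%MS.
  rewrite addsmx_sub; apply/andP; split; apply/sub_kermxP => //.
  by rewrite /B mulmxBr mulmxA mulmx_ker mul0mx subr0.
have disj : (kermx A :&: X)%MS = 0.
  apply/eqP; rewrite -submx0.
  have /submxP [D hD] : (kermx A :&: X <= X)%MS by exact: capmxSr.
  have hK : ((kermx A :&: X)%MS *m A == 0) by rewrite -sub_kermx capmxSl.
  rewrite hD -mulmxA mulmx_free_eq0 // in hK.
  by rewrite hD (eqP hK) mul0mx sub0mx.
have rX : \rank X = k.
  apply/eqP; rewrite eqn_leq rank_leq_row /=.
  move: fXA; rewrite /row_free => /eqP h.
  by rewrite -{1}h; exact: mxrankM_maxl.
have := mxrankS sub; rewrite mxrank_disjoint_sum // !mxrank_ker rX.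
have := rank_leq_row A; have := rank_leq_row B. lia.
Qed.

Lemma pidpid l m : (l <= m)%N -> (pid_mx l : 'M[F]_(l,m)) *m (pid_mx l : 'M_(m,l)) = 1%:M.
Proof. by move=> lm; rewrite mul_pid_mx minnn (minn_idPr lm) pid_mx_1. Qed.

Lemma ext_unit m l (U : 'M[F]_(m,l)) : \rank U = l ->
  exists2 P : 'M_m, P \in unitmx & U = P *m pid_mx l.
Proof.
move=> rU.
have lm : (l <= m)%N by rewrite -rU rank_leq_row.
set cU := col_ebase U; set rE := row_ebase U.
have eU : U = cU *m pid_mx l *m rE by rewrite /cU /rE -{1}(mulmx_ebase U) rU.
pose W : 'M[F]_m := (pid_mx l : 'M_(m,l)) *m rE *m pid_mx l + copid_mx l.
pose W' : 'M[F]_m := (pid_mx l : 'M_(m,l)) *m invmx rE *m pid_mx l + copid_mx l.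
have pp := pidpid lm.
have c1 : (pid_mx l : 'M[F]_(l,m)) *m copid_mx l = 0 by rewrite mul_pid_mx_copid.
have c2 : copid_mx l *m (pid_mx l : 'M[F]_(m,l)) = 0 by rewrite mul_copid_mx_pid.
have c4 : copid_mx l *m copid_mx l = copid_mx l :> 'M[F]_m by rewrite copid_mx_id.
have c5 : (pid_mx l : 'M[F]_m) + copid_mx l = 1%:M by rewrite /copid_mx addrC subrK.
have t1 : ((pid_mx l : 'M_(m,l)) *m rE *m (pid_mx l : 'M_(l,m))) *m ((pid_mx l : 'M_(m,l)) *m invmx rE *m (pid_mx l : 'M_(l,m))) = pid_mx l.
  rewrite !mulmxA -(mulmxA _ (pid_mx l) (pid_mx l)) pp mulmx1.
  rewrite -(mulmxA _ rE (invmx rE)) mulmxV ?row_ebase_unit // mulmx1.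
  by rewrite mul_pid_mx minnn; congr pid_mx; lia.
have t2 : ((pid_mx l : 'M_(m,l)) *m rE *m (pid_mx l : 'M_(l,m))) *m copid_mx l = 0.
  by rewrite -mulmxA c1 mulmx0.
have t3 : copid_mx l *m ((pid_mx l : 'M_(m,l)) *m invmx rE *m (pid_mx l : 'M_(l,m))) = 0.
  by rewrite !mulmxA c2 !mul0mx.
have WW : W *m W' = 1%:M.
  rewrite /W /W'; set cp := copid_mx l; set a := _ *m _ *m _; set b := _ *m _ *m _.
  rewrite mulmxDl [a *m _]mulmxDr [cp *m _]mulmxDr /a /b /cp.
  by rewrite t1 t2 t3 c4 addr0 add0r c5.
exists (cU *m W).
  by rewrite unitmx_mul col_ebase_unit (mulmx1_unit WW).1.
rewrite eU -!mulmxA; congr (cU *m _).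
rewrite /W mulmxDl c2 addr0 -!mulmxA pp mulmx1 //.
Qed.

Lemma ext_unitr l k (V : 'M[F]_(l,k)) : \rank V = l ->
  exists2 Q : 'M_k, Q \in unitmx & V = pid_mx l *m Q.
Proof.
move=> rV; have [P uP hP] := ext_unit (etrans (mxrank_tr V) rV).
exists P^T; first by rewrite unitmx_tr.
by rewrite -[V]trmxK hP trmx_mul tr_pid_mx.
Qed.

Lemma rank1_dec m n (A : 'M[F]_(m,n)) : \rank A = 1%N ->
  exists (u : 'cV_m) (v : 'rV_n), A = u *m v.
Proof.
move=> r1; move: (col_base A) (row_base A) (mulmx_base A).
rewrite r1 => C R <-; by exists C, R.
Qed.

End MatLemmas.
Lemma mk_aut (T : finType) (e : rel T) (f : T -> T) :
  injective f -> (forall x y, e (f x) (f y) = e x y) ->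
  exists g : {perm T}, graph_aut e g /\ forall x, g x = f x.
Proof.
move=> fi fe; exists (perm fi); split; last exact: permE.
by move=> x y; rewrite !permE fe.
Qed.

Lemma addBB (V : zmodType) (x a b : V) : (x + a) - (x + b) = a - b.
Proof. by rewrite opprD addrACA subrr add0r. Qed.

Lemma subBB (V : zmodType) (x a b : V) : (a - x) - (b - x) = a - b.
Proof. by rewrite opprB addrA subrK. Qed.

Section MatLemmas2.
Variable F : fieldType.

Lemma rank1_red m n (A : 'M[F]_(m,n)) (x : 'rV_m) (y : 'cV_n) a :
  x *m A *m y = a%:M -> a != 0 ->
  \rank (A - A *m (a^-1 *: (y *m x *m A))) = (\rank A).-1 /\
  \rank (A *m (a^-1 *: (y *m x *m A))) = 1%N.
Proof.
move=> hxy a0; set C := a^-1 *: _.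
have XB : x *m (A - A *m C) = 0.
  rewrite mulmxBr /C -!scalemxAr !mulmxA.
  rewrite hxy mul_scalar_mx -scalemxAl scalerA mulVf //.
  by rewrite scale1r subrr.
have xA0 : x *m A != 0.
  apply/eqP => h; move: hxy; rewrite h mul0mx => /matrixP /(_ 0 0).
  by rewrite !mxE /= mulr1n => /esym/eqP; rewrite (negbTE a0).
have fr : row_free (x *m A) by rewrite /row_free rank_rV xA0.
have h1 := rank_red XB fr.
have h2 : (\rank (A *m C) <= 1)%N.
  rewrite /C -scalemxAr (leq_trans (mxrank_scale _ _)) //.
  rewrite !mulmxA (leq_trans (mxrankM_maxl _ _)) //.
  rewrite (leq_trans (mxrankM_maxl _ _)) //.
  exact: rank_leq_col.
have h3 : (\rank A <= \rank (A - A *m C)%R + \rank (A *m C))%N.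
  by rewrite -{1}(subrK (A *m C) A) mxrank_add.
split; lia.
Qed.

Lemma entry_mx m n (A : 'M[F]_(m,n)) i j :
  (delta_mx 0 i : 'rV_m) *m A *m (delta_mx j 0 : 'cV_n) = (A i j)%:M.
Proof.
rewrite -rowE -colE; apply/matrixP => a b.
by rewrite !mxE !ord1 /= mulr1n.
Qed.

Lemma nz_entry m n (A : 'M[F]_(m,n)) : A != 0 -> exists i j, A i j != 0.
Proof.
move=> A0; case: (boolP [exists i, exists j, A i j != 0]).
  by move=> /existsP [i /existsP [j h]]; exists i, j.
rewrite negb_exists => /forallP h.
case/negP: A0; apply/eqP/matrixP => i j; rewrite mxE.
by move: (h i); rewrite negb_exists => /forallP /(_ j); rewrite negbK => /eqP.
Qed.

Definition Sd l i : 'M[F]_l := \sum_(j < l | (j < i)%N) delta_mx j j.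

Lemma SdS l i (hi : (i < l)%N) : Sd l i.+1 = Sd l i + delta_mx (Ordinal hi) (Ordinal hi).
Proof.
rewrite /Sd (bigD1 (Ordinal hi)) //= addrC; congr (_ + _).
apply: eq_bigl => j; rewrite ltnS -val_eqE /=.
by case: ltngtP.
Qed.

Lemma Sd0 l : Sd l 0 = 0.
Proof. by rewrite /Sd big1 // => j; rewrite ltn0. Qed.

Lemma mul_delta_cr m l k (U : 'M[F]_(m,l)) (V : 'M[F]_(l,k)) j j' :
  U *m delta_mx j j' *m V = col j U *m row j' V.
Proof.
rewrite colE rowE !mulmxA -(mulmxA U (delta_mx j 0) (delta_mx 0 j')).
by rewrite mul_delta_mx.
Qed.

End MatLemmas2.
Section BilCore.
Variable F : fieldType.

Lemma bil_core_mx m k l (D : nat -> 'M[F]_(m,k)) : D 0%N = 0 ->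
  (forall j, (j < l)%N -> \rank (D j.+1 - D j) = 1%N) -> \rank (D l) = l ->
  exists P Q, [/\ P \in unitmx, Q \in unitmx & forall i, (i <= l)%N ->
    D i = P *m ((pid_mx l : 'M_(m,l)) *m Sd F l i *m (pid_mx l : 'M_(l,k))) *m Q].
Proof.
move=> D0 hr rl.
have H : forall j, exists uv : 'cV[F]_m * 'rV[F]_k, (j < l)%N ==> (D j.+1 - D j == uv.1 *m uv.2).
  move=> j; case: (ltnP j l) => hj.
    by have [u [v h]] := rank1_dec (hr j hj); exists (u, v); rewrite h eqxx.
  by exists (0, 0).
pose uv j := xchoose (H j).
have huv j : (j < l)%N -> D j.+1 - D j = (uv j).1 *m (uv j).2.
  by move=> hj; apply/eqP; exact: (implyP (xchooseP (H j)) hj).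
pose U : 'M[F]_(m,l) := \matrix_(a, j) (uv j).1 a 0.
pose V : 'M[F]_(l,k) := \matrix_(j, b) (uv j).2 0 b.
have hD : forall i, (i <= l)%N -> D i = U *m Sd F l i *m V.
  elim => [|i IH] hi; first by rewrite D0 Sd0 mulmx0 mul0mx.
  rewrite (SdS F hi) mulmxDr mulmxDl -IH ?(ltnW hi) // mul_delta_cr.
  have -> : col (Ordinal hi) U = (uv i).1.
    by apply/matrixP => a b; rewrite !mxE ord1.
  have -> : row (Ordinal hi) V = (uv i).2.
    by apply/matrixP => a b; rewrite !mxE ord1.
  by rewrite -huv // addrC subrK.
have rU : \rank U = l.
  apply/eqP; rewrite eqn_leq rank_leq_col /= -{1}rl hD //.
  by rewrite (leq_trans (mxrankM_maxl _ _)) // mxrankM_maxl.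
have rV : \rank V = l.
  apply/eqP; rewrite eqn_leq rank_leq_row /= -{1}rl hD //.
  exact: mxrankM_maxr.
have [P uP hP] := ext_unit rU.
have [Q uQ hQ] := ext_unitr rV.
exists P, Q; split => // i hi.
by rewrite hD // hP hQ !mulmxA.
Qed.
End BilCore.

Section BilGraph.
Variables (F : finFieldType) (m k : nat).
Local Notation M := 'M[F]_(m,k).

Definition bdist (X Y : M) := \rank (X - Y).

Lemma bil_step (X Y : M) n : bdist X Y = n.+1 -> exists Z, bil_adj X Z /\ bdist Z Y = n.
Proof.
rewrite /bdist => h; set A := X - Y.
have A0 : A != 0 by rewrite -mxrank_eq0 h.
have [i [j aij]] := nz_entry A0.
have [r1 r2] := rank1_red (entry_mx A i j) aij.
set R := A *m _ in r1 r2.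
exists (X - R); split.
  by rewrite /bil_adj opprB addrC subrK r2.
by rewrite -addrAC -/A r1 /A h.
Qed.

Definition bstd (l : nat) : seq M :=
  mkseq (fun i => (pid_mx l : 'M_(m,l)) *m Sd F l i *m (pid_mx l : 'M_(l,k))) l.+1.

Lemma bil_gt : geodesic_transitive (@bil_adj F m k).
Proof.
apply: (@gt_std _ _ bdist _ _ _ _ _ bstd) => //.
- by move=> X Y h; apply/eqP; rewrite -subr_eq0 -mxrank_eq0; apply/eqP.
- by move=> X; rewrite /bdist subrr mxrank0.
- move=> X Y Z; rewrite /bdist.
  have -> : X - Z = (X - Y) + (Y - Z) by rewrite addrA subrK.
  exact: mxrank_add.
- exact: bil_step.
move=> x s p hd.
set l := size s.
pose D i := nth x (x :: s) i - x.
have D0 : D 0%N = 0 by rewrite /D subrr.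
have hr : forall j, (j < l)%N -> \rank (D j.+1 - D j) = 1%N.
  move=> j hj; rewrite /D subBB -mxrank_opp opprB.
  by move/pathP: p => /(_ x j hj); rewrite /bil_adj => /eqP.
have rl : \rank (D l) = l.
  by rewrite /D -mxrank_opp opprB; exact: hd.
have [P [Q [uP uQ hD]]] := bil_core_mx D0 hr rl.
have fi : injective (fun X : M => x + P *m X *m Q).
  move=> X Y /= /eqP; rewrite -subr_eq0 addBB -mulmxBl -mulmxBr.
  move=> h; apply/eqP; rewrite -subr_eq0; move: h.
  move/eqP => h; have := congr1 (fun Z => invmx P *m Z *m invmx Q) h.
  by rewrite /= mulmx0 mul0mx !mulmxA mulmxK // mulVmx // mul1mx => ->.
have fe : forall X Y, bil_adj (x + P *m X *m Q) (x + P *m Y *m Q) = bil_adj X Y.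
  by move=> X Y; rewrite /bil_adj addBB -mulmxBl -mulmxBr rank_mulR_unit // rank_mulL_unit.
have [g [ag hg]] := mk_aut fi fe.
exists g; split => //.
rewrite /bstd; apply: (@eq_from_nth _ x); first by rewrite size_map size_mkseq.
move=> i; rewrite size_map size_mkseq ltnS => hi.
rewrite (nth_map 0) ?size_mkseq // nth_mkseq // hg -hD // /D.
by rewrite addrC subrK.
Qed.
End BilGraph.
Section AltLemmas.
Variable F : finFieldType.

Lemma altP k (A : 'M[F]_k) : reflect (exists B, A = B - B^T) (alternating A).
Proof.
apply: (iffP idP).
  move=> /andP [/eqP hT /forallP hd].
  exists (\matrix_(a, b) if (a < b)%N then A a b else 0).
  apply/matrixP => a b; rewrite !mxE.
  case: (ltngtP a b) => h.
  - by rewrite subr0.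
  - have := congr1 (fun M : 'M[F]_k => M b a) hT; rewrite !mxE => ->.
    by rewrite sub0r.
  - have eab : a = b by apply: val_inj.
    by rewrite eab (eqP (hd b)) subrr.
move=> [B ->]; apply/andP; split.
  by rewrite linearB /= trmxK opprB.
by apply/forallP => a; rewrite !mxE subrr.
Qed.

Lemma alt_add k (A B : 'M[F]_k) : alternating A -> alternating B -> alternating (A + B).
Proof.
move=> /altP [A' ->] /altP [B' ->]; apply/altP; exists (A' + B').
by rewrite linearD /= opprD addrACA.
Qed.

Lemma alt_opp k (A : 'M[F]_k) : alternating A -> alternating (- A).
Proof.
move=> /altP [A' ->]; apply/altP; exists A'^T.
by rewrite trmxK opprB.
Qed.

Lemma alt_sub k (A B : 'M[F]_k) : alternating A -> alternating B -> alternating (A - B).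
Proof. by move=> hA hB; apply: alt_add => //; apply: alt_opp. Qed.

Lemma alt_cong k n (P : 'M[F]_(k,n)) (A : 'M[F]_n) : alternating A -> alternating (P *m A *m P^T).
Proof.
move=> /altP [B ->]; apply/altP; exists (P *m B *m P^T).
by rewrite mulmxBr mulmxBl !trmx_mul trmxK mulmxA.
Qed.

Lemma alt_red k (A : 'M[F]_k) i j : alternating A -> A i j != 0 ->
  let a := A i j in let p := row i A in let q := row j A in
  let R := a^-1 *: (p^T *m q - q^T *m p) in
  [/\ alternating R, \rank (A - R) = (\rank A - 2)%N, \rank R = 2%N & (2 <= \rank A)%N].
Proof.
move=> hA a0 a p q R.
have AT : A^T = - A by case/andP: hA => /eqP.
have hd : forall t, A t t = 0 by case/andP: hA => _ /forallP h t; apply/eqP.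
have ent : forall (u v : 'I_k), (delta_mx 0 v : 'rV_k) *m (row u A)^T = (A u v)%:M.
  move=> u v; rewrite -[LHS]trmxK trmx_mul trmxK trmx_delta rowE entry_mx.
  by rewrite tr_scalar_mx.
have Aji : A j i = - a.
  by have := congr1 (fun M : 'M[F]_k => M i j) AT; rewrite !mxE => <-.
have altR : alternating R.
  apply/altP; exists (a^-1 *: (p^T *m q)).
  by rewrite /R linearZ /= trmx_mul trmxK scalerBr.
have eR : R = A *m (a^-1 *: ((delta_mx j 0 : 'cV_k) *m p - (delta_mx i 0 : 'cV_k) *m q)).
  rewrite /R -scalemxAr; congr (_ *: _).
  rewrite mulmxBr !mulmxA /p /q !tr_row AT !colE.
  by rewrite !mulNmx opprK addrC.
have pq_i : (delta_mx 0 i : 'rV_k) *m R = p.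
  rewrite /R -scalemxAr mulmxBr !mulmxA /p /q ent ent (hd i) Aji.
  rewrite !mul_scalar_mx scale0r sub0r scaleNr opprK scalerA mulVf //.
  by rewrite scale1r.
have pq_j : (delta_mx 0 j : 'rV_k) *m R = q.
  rewrite /R -scalemxAr mulmxBr !mulmxA /p /q ent ent (hd j).
  rewrite !mul_scalar_mx scale0r subr0 scalerA mulVf //.
  by rewrite scale1r.
pose X : 'M[F]_(1 + 1,k) := col_mx (delta_mx 0 i : 'rV_k) (delta_mx 0 j : 'rV_k).
have XB : X *m (A - A *m (a^-1 *: ((delta_mx j 0 : 'cV_k) *m p - (delta_mx i 0 : 'cV_k) *m q))) = 0.
  rewrite -eR mul_col_mx !mulmxBr pq_i pq_j -!rowE subrr subrr.
  exact: col_mx0.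
have fr : row_free (X *m A).
  apply: inj_row_free => v.
  rewrite -[v]hsubmxK mul_col_mx mul_row_col -!rowE -/p -/q => h.
  have h1 := congr1 (fun M => M *m (delta_mx j 0 : 'cV_k)) h.
  have h2 := congr1 (fun M => M *m (delta_mx i 0 : 'cV_k)) h.
  move: h1 h2; rewrite /= !mulmxDl mul0mx -!mulmxA /p /q !rowE !entry_mx.
  rewrite (hd i) (hd j) Aji -/a !mul_mx_scalar !scale0r mul0mx add0r addr0.
  move=> /eqP; rewrite scaler_eq0 (negbTE a0) /= => /eqP ->.
  move=> /eqP; rewrite scaler_eq0 oppr_eq0 (negbTE a0) /= => /eqP ->.
  by rewrite row_mx0.
have h1 := rank_red XB fr; rewrite -eR in h1.
have h2 : (\rank R <= 2)%N.
  rewrite /R (leq_trans (mxrank_scale _ _)) // (leq_trans (mxrank_add _ _)) //.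
  rewrite mxrank_opp (leq_trans (leq_add (mxrankM_maxl _ _) (mxrankM_maxl _ _))) //.
  by rewrite -(addn1 1) leq_add // rank_leq_col.
have h3 : (\rank A <= \rank (A - R)%R + \rank R)%N.
  by rewrite -{1}(subrK R A) mxrank_add.
move: h1 h2 h3; set u := \rank (A - R); set v := \rank R; set w := \rank A.
move=> h1 h2 h3; split => //; lia.
Qed.
End AltLemmas.
Section AltMore.
Variable F : finFieldType.

Lemma alt_even_n N : forall n k (A : 'M[F]_k), (n <= N)%N -> alternating A -> \rank A = n -> ~~ odd n.
Proof.
elim: N => [|N IH] n k A hn hA hr.
  by move: hn; rewrite leqn0 => /eqP ->.
case: (posnP n) => [-> //|n0].
have A0 : A != 0 by rewrite -mxrank_eq0 hr -lt0n.
have [i [j aij]] := nz_entry A0.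
have [altR r1 r2 r3] := alt_red hA aij.
have hAR := alt_sub hA altR.
have h := IH (\rank A - 2)%N _ _ (ltac:(lia)) hAR r1.
rewrite -hr; move: h r3; set t := \rank A => h r3.
have -> : t = (t - 2).+2 by lia.
by rewrite /= negbK.
Qed.

Lemma alt_even k (A : 'M[F]_k) : alternating A -> ~~ odd (\rank A).
Proof. by move=> hA; exact: (alt_even_n (leqnn _) hA). Qed.

Lemma alt_rank2_dec k (R : 'M[F]_k) : alternating R -> \rank R = 2%N ->
  exists p q : 'rV_k, R = p^T *m q - q^T *m p.
Proof.
move=> hR r2.
have R0 : R != 0 by rewrite -mxrank_eq0 r2.
have [i [j aij]] := nz_entry R0.
have [_ r1 _ _] := alt_red hR aij.
move: r1; rewrite r2 subnn => /eqP; rewrite mxrank_eq0 subr_eq0 => /eqP ->.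
exists ((R i j)^-1 *: row i R), (row j R).
by rewrite scalerBr [((_ *: _)^T)]linearZ /= -scalemxAl -scalemxAr.
Qed.

Lemma half_eq1 r : ~~ odd r -> (r == 2%N) = (r./2 == 1%N).
Proof.
move=> h; have e := odd_double_half r; rewrite (negbTE h) add0n in e.
by rewrite -e; case: (r./2) => [|[|t]].
Qed.

Lemma even_eq r : ~~ odd r -> r = (r./2 * 2)%N.
Proof.
move=> h; have e := odd_double_half r; rewrite (negbTE h) add0n -muln2 in e.
by rewrite e.
Qed.

Definition ev l (j : 'I_l) : 'I_(l.*2) := @Ordinal (l.*2) (j.*2) (etrans (ltn_double _ _) (ltn_ord j)).
Definition od l (j : 'I_l) : 'I_(l.*2) := @Ordinal (l.*2) (j.*2.+1) (etrans (ltn_Sdouble _ _) (ltn_ord j)).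

Definition Js l i : 'M[F]_(l.*2) :=
  \sum_(j < l | (j < i)%N) (delta_mx (ev j) (od j) - delta_mx (od j) (ev j)).

Lemma sum_ltS (V : zmodType) l i (hi : (i < l)%N) (G : 'I_l -> V) :
  \sum_(j < l | (j < i.+1)%N) G j = \sum_(j < l | (j < i)%N) G j + G (Ordinal hi).
Proof.
rewrite (bigD1 (Ordinal hi)) //= addrC; congr (_ + _).
apply: eq_bigl => j; rewrite ltnS -val_eqE /=.
by case: ltngtP.
Qed.

Lemma Js_alt l i : alternating (Js l i).
Proof.
rewrite /Js; elim: i => [|i IH].
  by rewrite big1 ?ltn0 //; apply/altP; exists 0; rewrite trmx0 subrr.
case: (ltnP i l) => hi.
  rewrite (sum_ltS hi); apply: alt_add => //.
  by apply/altP; exists (delta_mx (ev (Ordinal hi)) (od (Ordinal hi))); rewrite trmx_delta.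
rewrite (eq_bigl (fun j : 'I_l => (j < i)%N)) // => j.
by rewrite ltnS; apply/idP/idP => h; [rewrite (leq_trans _ hi) | rewrite ltnW].
Qed.

Lemma alt_congT k (Q : 'M[F]_k) A : alternating A -> alternating (Q^T *m A *m Q).
Proof. by move=> h; rewrite -{2}(trmxK Q); exact: alt_cong. Qed.

Lemma alt_std k l i : alternating ((pid_mx l.*2 : 'M[F]_(k, l.*2)) *m Js l i *m (pid_mx l.*2 : 'M_(l.*2, k))).
Proof. by have := alt_cong (pid_mx l.*2 : 'M[F]_(k,l.*2)) (Js_alt l i); rewrite tr_pid_mx. Qed.

Lemma mul_delta_tr m l (W : 'M[F]_(l,m)) a b :
  W^T *m delta_mx a b *m W = (row a W)^T *m row b W.
Proof. by rewrite mul_delta_cr tr_row. Qed.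

Lemma alt_core_mx k l (D : nat -> 'M[F]_k) : D 0%N = 0 ->
  (forall j, (j < l)%N -> alternating (D j.+1 - D j) /\ \rank (D j.+1 - D j) = 2%N) ->
  \rank (D l) = l.*2 ->
  exists2 Q : 'M_k, Q \in unitmx & forall i, (i <= l)%N ->
    D i = Q^T *m ((pid_mx l.*2 : 'M_(k, l.*2)) *m Js l i *m (pid_mx l.*2 : 'M_(l.*2, k))) *m Q.
Proof.
move=> D0 hr rl.
have H : forall j, exists pq : 'rV[F]_k * 'rV[F]_k,
    (j < l)%N ==> (D j.+1 - D j == pq.1^T *m pq.2 - pq.2^T *m pq.1).
  move=> j; case: (ltnP j l) => hj; last by exists (0, 0).
  have [ha hb] := hr j hj.
  by have [p [q h]] := alt_rank2_dec ha hb; exists (p, q); rewrite h eqxx.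
pose pq j := xchoose (H j).
have hpq j : (j < l)%N -> D j.+1 - D j = (pq j).1^T *m (pq j).2 - (pq j).2^T *m (pq j).1.
  by move=> hj; apply/eqP; exact: (implyP (xchooseP (H j)) hj).
pose W : 'M[F]_(l.*2, k) := \matrix_(a, b) (if odd a then (pq a./2).2 else (pq a./2).1) 0 b.
have rev j : row (ev j) W = (pq j).1.
  by apply/matrixP => a b; rewrite !mxE /= odd_double doubleK ord1.
have rod j : row (od j) W = (pq j).2.
  by apply/matrixP => a b; rewrite !mxE /= odd_double /= uphalf_double ord1.
have hD : forall i, (i <= l)%N -> D i = W^T *m Js l i *m W.
  elim => [|i IH] hi.
    by rewrite D0 /Js big1 ?mulmx0 ?mul0mx // => j; rewrite ltn0.
  rewrite /Js (sum_ltS hi) mulmxDr mulmxDl -/(Js l i) -IH ?(ltnW hi) //.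
  rewrite mulmxBr mulmxBl !mul_delta_tr rev rod -hpq //.
  by rewrite addrC subrK.
have rW : \rank W = l.*2.
  apply/eqP; rewrite eqn_leq rank_leq_row /= -{1}rl hD //.
  exact: mxrankM_maxr.
have [Q uQ hQ] := ext_unitr rW.
exists Q => // i hi.
by rewrite hD // hQ trmx_mul tr_pid_mx !mulmxA.
Qed.
End AltMore.
Section AltGraph.
Variables (F : finFieldType) (k : nat).
Local Notation V := (alt_vertex F k).

Definition adist (X Y : V) := (\rank (val X - val Y))./2.

Lemma altv_even (X Y : V) : ~~ odd (\rank (val X - val Y)).
Proof. by apply: alt_even; apply: alt_sub; apply: valP. Qed.

Lemma half_tri a b c : ~~ odd a -> ~~ odd b -> ~~ odd c -> (a <= b + c)%N ->
  (a./2 <= b./2 + c./2)%N.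
Proof.
move=> ha hb hc; rewrite {1}(even_eq ha) {1}(even_eq hb) {1}(even_eq hc).
lia.
Qed.

Lemma alt_step (X Y : V) n : adist X Y = n.+1 -> exists Z, alt_adj X Z /\ adist Z Y = n.
Proof.
rewrite /adist => h; have ev := even_eq (altv_even X Y).
set A := val X - val Y in h ev.
have hA : alternating A by apply: alt_sub; apply: valP.
have A0 : A != 0 by rewrite -mxrank_eq0; apply/eqP => e; rewrite e in h.
have [i [j aij]] := nz_entry A0.
have [altR r1 r2 _] := alt_red hA aij.
set R := _ *: _ in altR r1 r2.
exists (exist (fun A : 'M[F]_k => alternating A) (val X - R) (alt_sub (valP X) altR)); split.
  by rewrite /alt_adj /= opprB addrC subrK r2.
rewrite /= -addrAC -/A r1; move: h ev; set t := \rank A => h ev.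
rewrite ev h; lia.
Qed.

Definition astd (l : nat) : seq V :=
  mkseq (fun i => exist (fun A : 'M[F]_k => alternating A) _ (alt_std F k l i)) l.+1.

Lemma alt_gt : geodesic_transitive (@alt_adj F k).
Proof.
apply: (@gt_std _ _ adist _ _ _ _ _ astd) => //.
- by move=> X Y; rewrite /alt_adj /adist half_eq1 // altv_even.
- move=> X Y h; apply: val_inj; apply/eqP; rewrite -subr_eq0 -mxrank_eq0.
  by rewrite (even_eq (altv_even X Y)) /adist in h *; rewrite h.
- by move=> X; rewrite /adist subrr mxrank0.
- move=> X Y Z; rewrite /adist.
  apply: half_tri; try exact: altv_even.
  have -> : val X - val Z = (val X - val Y) + (val Y - val Z) by rewrite addrA subrK.
  exact: mxrank_add.
- exact: alt_step.
move=> x s p hd.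
set l := size s.
pose D i := val (nth x (x :: s) i) - val x.
have D0 : D 0%N = 0 by rewrite /D subrr.
have hr : forall j, (j < l)%N -> alternating (D j.+1 - D j) /\ \rank (D j.+1 - D j) = 2%N.
  move=> j hj; rewrite /D subBB; split; first by apply: alt_sub; apply: valP.
  rewrite -mxrank_opp opprB.
  by move/pathP: p => /(_ x j hj); rewrite /alt_adj => /eqP.
have rl : \rank (D l) = l.*2.
  have := hd l (leqnn _); rewrite /adist => e.
  rewrite /D -mxrank_opp opprB (even_eq (altv_even _ _)) e.
  by rewrite muln2.
have [Q uQ hD] := alt_core_mx D0 hr rl.
pose f (X : V) : V := exist (fun A : 'M[F]_k => alternating A) (val x + Q^T *m val X *m Q) (alt_add (valP x) (alt_congT Q (valP X))).
have fi : injective f.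
  move=> X Y /(congr1 val) /= /eqP; rewrite -subr_eq0 addBB -mulmxBl -mulmxBr.
  move/eqP => h; have := congr1 (fun Z => invmx Q^T *m Z *m invmx Q) h.
  rewrite /= mulmx0 mul0mx !mulmxA mulmxK // mulVmx ?unitmx_tr // mul1mx => /eqP.
  by rewrite subr_eq0 => /eqP /val_inj.
have fe : forall X Y, alt_adj (f X) (f Y) = alt_adj X Y.
  move=> X Y; rewrite /alt_adj /= addBB -mulmxBl -mulmxBr rank_mulR_unit //.
  by rewrite rank_mulL_unit // unitmx_tr.
have [g [ag hg]] := mk_aut fi fe.
exists g; split => //.
rewrite /astd; apply: (@eq_from_nth _ x); first by rewrite size_map size_mkseq.
move=> i; rewrite size_map size_mkseq ltnS => hi.
rewrite (nth_map x) ?size_mkseq // nth_mkseq // hg; apply: val_inj => /=.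
by rewrite -hD // /D addrC subrK.
Qed.
End AltGraph.
Section Norm.
Variables (F : finFieldType) (s : {rmorphism F -> F}).
Hypothesis sK : forall x, s (s x) = x.
Hypothesis snt : exists z, s z != z.

Let Nm (x : F) := x * s x.
Let phi (y : F) := y / s y.

Lemma Nm_mul x y : Nm (x * y) = Nm x * Nm y.
Proof. by rewrite /Nm rmorphM mulrACA. Qed.

Lemma norm_surj (c : F) : c != 0 -> s c = c -> exists b, b * s b = c.
Proof.
move=> c0 sc.
have [z hz] := snt.
pose G := [set x : F | x != 0].
pose K := [set x : F | (x != 0) && (s x == x)].
pose H := [set x : F | Nm x == 1].
pose NG := Nm @: G.
pose PG := phi @: G.
have sx0 : forall x, (s x == 0) = (x == 0) by move=> x; rewrite fmorph_eq0.
have NGK : NG \subset K.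
  apply/subsetP => y /imsetP [x]; rewrite inE => x0 ->.
  by rewrite inE /Nm mulf_neq0 ?sx0 // rmorphM sK mulrC eqxx.
have HPG : H \subset PG.
  apply/subsetP => h; rewrite inE /Nm => /eqP hh.
  have h0 : h != 0 by apply/eqP => e; rewrite e mul0r in hh; move/eqP: hh; rewrite eq_sym oner_eq0.
  pose y a := a + h * s a.
  have ey a : h * s (y a) = y a.
    by rewrite /y rmorphD rmorphM sK mulrDr mulrA hh mul1r addrC.
  have [a ya] : exists a, y a != 0.
    case: (boolP (y 1 == 0)) => [/eqP y1|]; last by exists 1.
    exists z; rewrite /y.
    have hm1 : h = -1 by move: y1; rewrite /y rmorph1 mulr1 addrC => /eqP; rewrite addr_eq0 => /eqP.
    by rewrite hm1 mulN1r subr_eq0 eq_sym.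
  apply/imsetP; exists (y a); first by rewrite inE.
  rewrite /phi -{1}(ey a) mulfK // sx0 //.
have card1 : (#|G| <= #|NG| * #|H|)%N.
  pose sec (c : F) := odflt 1 [pick x in G | Nm x == c].
  have secP : forall x, x \in G -> sec (Nm x) \in G /\ Nm (sec (Nm x)) = Nm x.
    move=> x xG; rewrite /sec; case: pickP => [u /andP [uG /eqP hu] /=| /(_ x)].
      by [].
    by rewrite xG eqxx.
  pose f x := (Nm x, x / sec (Nm x)).
  have -> : #|G| = #|f @: G|.
    rewrite card_in_imset // => x y xG yG [e1 e2].
    move: e2; rewrite e1 => /(congr1 (fun t => t * sec (Nm y))).
    have [uG _] := secP y yG; rewrite inE in uG.
    by rewrite !divfK.
  rewrite -cardsX; apply: subset_leq_card; apply/subsetP => p /imsetP [x xG ->].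
  rewrite inE /= imset_f //= inE.
  have [uG uN] := secP x xG; rewrite inE in uG.
  have NmV : forall u, Nm u^-1 = (Nm u)^-1 by move=> u; rewrite /Nm fmorphV invfM.
  rewrite Nm_mul NmV uN mulfV //.
  by rewrite /Nm mulf_neq0 // ?sx0; rewrite inE in xG.
have card2 : (#|PG| * #|K| <= #|G|)%N.
  pose sec (h : F) := odflt 1 [pick x in G | phi x == h].
  have secP : forall h, h \in PG -> sec h \in G /\ phi (sec h) = h.
    move=> h /imsetP [x xG ->]; rewrite /sec; case: pickP => [u /andP [uG /eqP hu] /=| /(_ x)].
      by [].
    by rewrite xG eqxx.
  pose f (p : F * F) := sec p.1 * p.2.
  rewrite -cardsX -(@card_in_imset _ _ f).
    apply: subset_leq_card; apply/subsetP => y /imsetP [[h k]].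
    rewrite inE /= => /andP [hP kK] ->.
    have [uG _] := secP h hP; rewrite !inE in uG kK *.
    by rewrite /f mulf_neq0 //; case/andP: kK.
  move=> [h k] [h' k']; rewrite !inE /= => /andP [hP kK] /andP [hP' kK'] e.
  have [uG uh] := secP h hP; have [uG' uh'] := secP h' hP'.
  rewrite !inE in uG uG' kK kK'.
  case/andP: kK => k0 /eqP sk; case/andP: kK' => k0' /eqP sk'.
  have ph : forall u v, v != 0 -> s v = v -> phi (u * v) = phi u.
    move=> u v v0 sv; rewrite /phi rmorphM sv invfM mulrACA mulfV // mulr1 //.
  have eh : h = h'.
    by rewrite -uh -uh' -(ph _ k) // -(ph (sec h') k') //; move: e; rewrite /f /= => ->.
  move: e; rewrite /f /= eh => /(mulfI uG') ->.
  by [].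
have PG0 : (0 < #|PG|)%N.
  apply/card_gt0P; exists (phi 1); apply: imset_f; by rewrite inE oner_eq0.
have HPGc := subset_leq_card HPG.
have : (#|K| <= #|NG|)%N.
  have h1 : (#|PG| * #|K| <= #|PG| * #|NG|)%N.
    apply: (leq_trans card2); apply: (leq_trans card1).
    by rewrite mulnC leq_mul2r HPGc orbT.
  by rewrite leq_mul2l in h1; case/orP: h1 => // /eqP e; rewrite e in PG0.
move=> hc; have : NG == K by rewrite eqEcard NGK hc.
move/eqP => eNK.
have : c \in K by rewrite inE c0 sc eqxx.
by rewrite -eNK => /imsetP [x _ ->]; exists x.
Qed.

End Norm.
Section HerLemmas.
Variables (F : finFieldType) (s : {rmorphism F -> F}).
Hypothesis sK : forall x, s (s x) = x.
Hypothesis snt : exists z, s z != z.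

Definition st m n (A : 'M[F]_(m,n)) : 'M[F]_(n,m) := (map_mx s A)^T.

Lemma mapK m n (A : 'M[F]_(m,n)) : map_mx s (map_mx s A) = A.
Proof. by apply/matrixP => i j; rewrite !mxE sK. Qed.

Lemma st_mul m n p (A : 'M[F]_(m,n)) (B : 'M[F]_(n,p)) : st (A *m B) = st B *m st A.
Proof. by rewrite /st map_mxM trmx_mul. Qed.

Lemma stD m n (A B : 'M[F]_(m,n)) : st (A + B) = st A + st B.
Proof. by rewrite /st map_mxD linearD. Qed.

Lemma stZ m n c (A : 'M[F]_(m,n)) : st (c *: A) = s c *: st A.
Proof. by rewrite /st map_mxZ linearZ. Qed.

Lemma st_delta m n i j : st (delta_mx i j : 'M[F]_(m,n)) = delta_mx j i.
Proof. by rewrite /st map_delta_mx trmx_delta. Qed.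

Lemma stK m n (A : 'M[F]_(m,n)) : st (st A) = A.
Proof. by rewrite /st -map_trmx trmxK mapK. Qed.

Lemma herE k (A : 'M[F]_k) : Defs.hermitian s A -> st A = A.
Proof. by move/eqP => h; rewrite /st -h trmxK. Qed.

Lemma herP k (A : 'M[F]_k) : st A = A -> Defs.hermitian s A.
Proof. by move=> h; apply/eqP; rewrite -{1}h /st trmxK. Qed.

Lemma her_add k (A B : 'M[F]_k) : Defs.hermitian s A -> Defs.hermitian s B -> Defs.hermitian s (A + B).
Proof. by move=> /herE hA /herE hB; apply: herP; rewrite stD hA hB. Qed.

Lemma her_opp k (A : 'M[F]_k) : Defs.hermitian s A -> Defs.hermitian s (- A).
Proof.
move=> /herE hA; apply: herP.
by rewrite /st map_mxN linearN /= -/(st A) hA.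
Qed.

Lemma her_sub k (A B : 'M[F]_k) : Defs.hermitian s A -> Defs.hermitian s B -> Defs.hermitian s (A - B).
Proof. by move=> hA hB; apply: her_add => //; apply: her_opp. Qed.

Lemma her_cong k n (Q : 'M[F]_(n,k)) (A : 'M[F]_n) : Defs.hermitian s A -> Defs.hermitian s (st Q *m A *m Q).
Proof. by move=> /herE hA; apply: herP; rewrite !st_mul stK hA mulmxA. Qed.

Lemma her_quad k (A : 'M[F]_k) (x : 'rV_k) : Defs.hermitian s A ->
  s ((x *m A *m st x) 0 0) = (x *m A *m st x) 0 0.
Proof.
move=> /herE hA.
have h : st (x *m A *m st x) = x *m A *m st x by rewrite !st_mul stK hA mulmxA.
have := congr1 (fun M : 'M[F]_1 => M 0 0) h.
by rewrite /st !mxE.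
Qed.

Lemma exists_trace : exists t : F, t + s t != 0.
Proof.
have [z hz] := snt.
case: (boolP ((1 : F) + 1 == 0)) => [/eqP h2|h2]; last by exists 1; rewrite rmorph1.
exists z; apply: contra hz => /eqP h.
have e1 : s z = - z by apply/eqP; rewrite -addr_eq0 addrC h.
have e2 : z + z = 0 by rewrite -{1 2}[z]mulr1 -mulrDr h2 mulr0.
have e3 : - z = z by apply/eqP; rewrite eq_sym -addr_eq0 e2.
by rewrite e1 e3.
Qed.

Lemma her_nz_quad k (A : 'M[F]_k) : Defs.hermitian s A -> A != 0 ->
  exists x : 'rV_k, (x *m A *m st x) 0 0 != 0.
Proof.
move=> hA A0.
have ent : forall a b, (delta_mx 0 a : 'rV_k) *m A *m st (delta_mx 0 b : 'rV_k) = (A a b)%:M.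
  by move=> a b; rewrite st_delta entry_mx.
case: (boolP [exists i, A i i != 0]).
  move=> /existsP [i hi]; exists (delta_mx 0 i).
  by rewrite ent mxE eqxx mulr1n.
rewrite negb_exists => /forallP hd.
have hd' : forall i, A i i = 0 by move=> i; move: (hd i); rewrite negbK => /eqP.
have [i [j aij]] := nz_entry A0.
have Aji : A j i = s (A i j).
  move/eqP: hA => /(congr1 (fun M : 'M[F]_k => M j i)) => e.
  by rewrite !mxE in e; rewrite e sK.
have [t ht] := exists_trace.
pose c := s (t / A i j).
exists (delta_mx 0 i + c *: delta_mx 0 j).
rewrite stD stZ !mulmxDl !mulmxDr -!scalemxAl -!scalemxAr !ent !mxE !eqxx !mulr1n.
rewrite !hd' !mulr0 add0r addr0.
by rewrite /c sK divfK // Aji -rmorphM divfK.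
Qed.

Lemma her_red k (A : 'M[F]_k) : Defs.hermitian s A -> A != 0 ->
  exists w : 'rV_k, \rank (A - st w *m w) = (\rank A).-1 /\ \rank (st w *m w) = 1%N.
Proof.
move=> hA A0.
have [x hx] := her_nz_quad hA A0.
set a := (x *m A *m st x) 0 0 in hx.
have ea : x *m A *m st x = a%:M by rewrite {1}(mx11_scalar (x *m A *m st x)).
have sa : s a = a by rewrite /a her_quad.
have [r1 r2] := rank1_red ea hx.
have [b hb] := norm_surj sK snt (invr_neq0 hx) (etrans (fmorphV s a) (congr1 _ sa)).
exists (b *: (x *m A)).
have -> : st (b *: (x *m A)) *m (b *: (x *m A)) = A *m (a^-1 *: (st x *m x *m A)).
  rewrite stZ -scalemxAl -scalemxAr scalerA mulrC hb.
  rewrite -scalemxAr; congr (_ *: _).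
  by rewrite st_mul (herE hA) !mulmxA.
by [].
Qed.

Lemma Sd_her k l i : Defs.hermitian s ((pid_mx l : 'M[F]_(k,l)) *m Sd F l i *m (pid_mx l : 'M[F]_(l,k))).
Proof.
have -> : (pid_mx l : 'M[F]_(k,l)) = st (pid_mx l : 'M[F]_(l,k)) by rewrite /st map_pid_mx tr_pid_mx.
apply: her_cong; apply: herP.
elim: i => [|i IH]; first by rewrite Sd0 /st map_mx0 trmx0.
case: (ltnP i l) => hi.
  by rewrite (SdS F hi) stD IH st_delta.
rewrite /Sd (eq_bigl (fun j : 'I_l => (j < i)%N)) // => j.
by rewrite ltnS; apply/idP/idP => h; [rewrite (leq_trans _ hi) | rewrite ltnW].
Qed.

Lemma her_core_mx k l (D : nat -> 'M[F]_k) : D 0%N = 0 ->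
  (forall j, (j < l)%N -> Defs.hermitian s (D j.+1 - D j) /\ \rank (D j.+1 - D j) = 1%N) ->
  \rank (D l) = l ->
  exists2 Q : 'M_k, Q \in unitmx & forall i, (i <= l)%N ->
    D i = st Q *m ((pid_mx l : 'M_(k, l)) *m Sd F l i *m (pid_mx l : 'M_(l, k))) *m Q.
Proof.
move=> D0 hr rl.
have H : forall j, exists w : 'rV[F]_k, (j < l)%N ==> (D j.+1 - D j == st w *m w).
  move=> j; case: (ltnP j l) => hj; last by exists 0.
  have [ha hb] := hr j hj.
  have R0 : D j.+1 - D j != 0 by rewrite -mxrank_eq0 hb.
  have [w [r1 _]] := her_red ha R0.
  exists w; move: r1; rewrite hb /= => /eqP; rewrite mxrank_eq0 subr_eq0 => /eqP ->.
  by rewrite eqxx.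
pose w j := xchoose (H j).
have hw j : (j < l)%N -> D j.+1 - D j = st (w j) *m w j.
  by move=> hj; apply/eqP; exact: (implyP (xchooseP (H j)) hj).
pose W : 'M[F]_(l, k) := \matrix_(j, b) (w j) 0 b.
have rw j : row j W = w j by apply/matrixP => a b; rewrite !mxE ord1.
have hD : forall i, (i <= l)%N -> D i = st W *m Sd F l i *m W.
  elim => [|i IH] hi.
    by rewrite D0 Sd0 mulmx0 mul0mx.
  rewrite (SdS F hi) mulmxDr mulmxDl -IH ?(ltnW hi) // mul_delta_cr.
  rewrite /st -tr_row -map_row rw -/(st _) -hw //.
  by rewrite addrC subrK.
have rW : \rank W = l.
  apply/eqP; rewrite eqn_leq rank_leq_row /= -{1}rl hD //.
  exact: mxrankM_maxr.
have [Q uQ hQ] := ext_unitr rW.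
exists Q => // i hi.
rewrite hD // hQ st_mul.
have -> : st (pid_mx l : 'M[F]_(l,k)) = pid_mx l by rewrite /st map_pid_mx tr_pid_mx.
by rewrite !mulmxA.
Qed.
End HerLemmas.
Section HerGraph.
Variables (F : finFieldType) (s : {rmorphism F -> F}) (k : nat).
Hypothesis sK : forall x, s (s x) = x.
Hypothesis snt : exists z, s z != z.
Local Notation V := (her_vertex s k).

Definition hdist (X Y : V) := \rank (val X - val Y).

Lemma her_rk1 (w : 'rV[F]_k) : Defs.hermitian s (st s w *m w).
Proof.
have h1 : Defs.hermitian s (1%:M : 'M[F]_1) by apply/eqP; rewrite trmx1 map_mx1.
by have := her_cong sK w h1; rewrite mulmx1.
Qed.

Lemma her_step (X Y : V) n : hdist X Y = n.+1 -> exists Z, her_adj X Z /\ hdist Z Y = n.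
Proof.
rewrite /hdist => h; set A := val X - val Y in h.
have hA : Defs.hermitian s A by apply: her_sub; apply: valP.
have A0 : A != 0 by rewrite -mxrank_eq0 h.
have [w [r1 r2]] := her_red sK snt hA A0.
exists (exist (fun M : 'M[F]_k => Defs.hermitian s M) (val X - st s w *m w) (her_sub (valP X) (her_rk1 w))); split.
  by rewrite /her_adj /= opprB addrC subrK r2.
by rewrite /= -addrAC -/A r1 h.
Qed.

Definition hstd (l : nat) : seq V :=
  mkseq (fun i => exist (fun M : 'M[F]_k => Defs.hermitian s M) _ (Sd_her sK k l i)) l.+1.

Lemma her_gt : geodesic_transitive (@her_adj F s k).
Proof.
apply: (@gt_std _ _ hdist _ _ _ _ _ hstd) => //.
- move=> X Y h; apply: val_inj; apply/eqP; rewrite -subr_eq0 -mxrank_eq0.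
  by apply/eqP.
- by move=> X; rewrite /hdist subrr mxrank0.
- move=> X Y Z; rewrite /hdist.
  have -> : val X - val Z = (val X - val Y) + (val Y - val Z) by rewrite addrA subrK.
  exact: mxrank_add.
- exact: her_step.
move=> x s0 p hd.
set l := size s0.
pose D i := val (nth x (x :: s0) i) - val x.
have D0 : D 0%N = 0 by rewrite /D subrr.
have hr : forall j, (j < l)%N -> Defs.hermitian s (D j.+1 - D j) /\ \rank (D j.+1 - D j) = 1%N.
  move=> j hj; rewrite /D subBB; split; first by apply: her_sub; apply: valP.
  rewrite -mxrank_opp opprB.
  by move/pathP: p => /(_ x j hj); rewrite /her_adj => /eqP.
have rl : \rank (D l) = l.
  by rewrite /D -mxrank_opp opprB; exact: hd.
have [Q uQ hD] := her_core_mx sK snt D0 hr rl.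
have uQs : st s Q \in unitmx by rewrite /st unitmx_tr map_unitmx.
pose f (X : V) : V := exist (fun M : 'M[F]_k => Defs.hermitian s M) (val x + st s Q *m val X *m Q)
   (her_add (valP x) (her_cong sK Q (valP X))).
have fi : injective f.
  move=> X Y /(congr1 val) /= /eqP; rewrite -subr_eq0 addBB -mulmxBl -mulmxBr.
  move/eqP => h; have := congr1 (fun Z => invmx (st s Q) *m Z *m invmx Q) h.
  rewrite /= mulmx0 mul0mx !mulmxA mulmxK // mulVmx // mul1mx => /eqP.
  by rewrite subr_eq0 => /eqP /val_inj.
have fe : forall X Y, her_adj (f X) (f Y) = her_adj X Y.
  move=> X Y; rewrite /her_adj /= addBB -mulmxBl -mulmxBr rank_mulR_unit //.
  by rewrite rank_mulL_unit.
have [g [ag hg]] := mk_aut fi fe.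
exists g; split => //.
rewrite /hstd; apply: (@eq_from_nth _ x); first by rewrite size_map size_mkseq.
move=> i; rewrite size_map size_mkseq ltnS => hi.
rewrite (nth_map x) ?size_mkseq // nth_mkseq // hg; apply: val_inj => /=.
by rewrite -hD // /D addrC subrK.
Qed.
End HerGraph.

Theorem proposition3p8 :
  (forall (F : finFieldType) (m k : nat), (m <= k)%N ->
     geodesic_transitive (@bil_adj F m k)) /\
  (forall (F : finFieldType) (k : nat),
     geodesic_transitive (@alt_adj F k)) /\
  (forall (F : finFieldType) (r k : nat) (sigma : {rmorphism F -> F}),
     #|F| = (r ^ 2)%N ->
     (forall x, sigma (sigma x) = x) -> (exists x, sigma x != x) ->
     geodesic_transitive (@her_adj F sigma k)).
Proof.
split; first by move=> F m k _; exact: bil_gt.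
split; first by move=> F k; exact: alt_gt.
by move=> F r k sigma _ sK snt; exact: her_gt.
Qed.
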